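(* Let $n\ge 2$ participants be partitioned as $[n]=H\sqcup C$ with $H\neq\emptyset$ (honest participants $H$, corrupt participants $C$). Suppose each participant $i$ holds one qubit $Q_i$, and the joint state of $Q_1,\dots,Q_n$ together with any auxiliary systems controlled by the corrupt participants is arbitrary (possibly entangled, and, after purifying into the corrupt participants' systems, assumed pure). Entanglement verification proceeds as follows: each honest participant $i\in H$ prepares $n-1$ fresh qubits in $\lvert 0\rangle$, applies a controlled-NOT with $Q_i$ as control and each fresh qubit as target, and sends one of these pseudo-copies to each other participant $j\neq i$; each corrupt participant sends to each honest participant an arbitrary qubit of its choice (possibly entangled with anything). Each honest participant $i$ then holds $n$ qubits ($Q_i$ and one qubit received from each $j\neq i$) and performs the two-outcome projective measurement $\{\Pi,\,I-\Pi\}$, where $\Pi$ is the projector onto $\mathrm{span}\{\lvert 0^n\rangle,\lvert 1^n\rangle\}$. If every honest participant obtains the outcome $\Pi$ (verification succeeds), then the post-measurement joint state is of the form $$\alpha\,\lvert 00\ldots 0\rangle_H\lvert\psi_0\rangle_C+\beta\,\lvert 11\ldots 1\rangle_H\lvert\psi_1\rangle_C,$$ where the subsystem $H$ consists of all qubits in the possession of the honest participants, the subsystem $C$ consists of all other systems (those held by corrupt participants, including pseudo-copies sent to them and their auxiliary systems), $\lvert\psi_0\rangle,\lvert\psi_1\rangle$ are unit vectors, and $\alpha,\beta\in\mathbb{C}$ satisfy $|\alpha|^2+|\beta|^2=1$. In particular this state is invariant under any permutation of the honest participants.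
   Context: Computational basis $\{\lvert 0\rangle,\lvert1\rangle\}$; $\lvert 0^n\rangle=\lvert 0\cdots0\rangle$, $\lvert 1^n\rangle=\lvert1\cdots1\rangle$ on $n$ qubits. A controlled-NOT applied to a target in $\lvert0\rangle$ creates a ''pseudo-copy'' of the control qubit in the computational basis. Communication between participants is over private authenticated quantum channels. *)

(* Defs.v *)
From HB Require Import structures.
From mathcomp Require Import all_boot all_order all_algebra all_fingroup all_field.
Set Implicit Arguments. Unset Strict Implicit. Unset Printing Implicit Defensive.
Import Order.TTheory GRing.Theory Num.Theory.
Local Open Scope ring_scope.

(* Participants are 'I_n; H : {set 'I_n} is the honest set, C = ~: H. *)
Definition honT (n : nat) (H : {set 'I_n}) : finType := {i : 'I_n | i \in H}.
Definition corT (n : nat) (H : {set 'I_n}) : finType := {j : 'I_n | j \notin H}.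

(* A vector of a finite-dimensional Hilbert space with computational basis
   T is an amplitude function T -> algC. *)
Definition sqnorm (T : finType) (v : T -> algC) : algC := \sum_(x : T) `|v x| ^+ 2.
Definition unit_vec (T : finType) (v : T -> algC) : Prop := sqnorm v = 1.

(* Basis of Q_1..Q_n (split as honest/corrupt qubits) (x) corrupt auxiliary A. *)
Definition QBasis n (H : {set 'I_n}) (A : finType) : finType :=
  (({ffun honT H -> bool} * {ffun corT H -> bool}) * A)%type.

(* Basis of the corrupt participants' input to their (arbitrary) operation:
   their own qubits Q_j, the auxiliary A, and the pseudo-copies received:
   entry  p j i  = pseudo-copy sent by honest i to corrupt j. *)
Definition CInBasis n (H : {set 'I_n}) (A : finType) : finType :=
  (({ffun corT H -> bool} * A) * {ffun corT H -> {ffun honT H -> bool}})%type.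

(* Basis of the corrupt output: entry r j i = qubit sent by corrupt j to
   honest i; B = all remaining systems kept by the corrupt participants. *)
Definition COutBasis n (H : {set 'I_n}) (B : finType) : finType :=
  ({ffun corT H -> {ffun honT H -> bool}} * B)%type.

(* Registers of the honest participants after communication: honest i holds
   n qubits  h i j  (j : 'I_n), where h i i is Q_i and, for j <> i, h i j is
   the qubit received from participant j. *)
Definition HReg n (H : {set 'I_n}) : finType := {ffun honT H -> {ffun 'I_n -> bool}}.

Definition FBasis n (H : {set 'I_n}) (B : finType) : finType := (HReg H * B)%type.

(* The corrupt operation, purified, is an isometry V : C_in -> C_out,
   given by its matrix entries V o u. *)
Definition is_isometry n (H : {set 'I_n}) (A B : finType)
  (V : COutBasis H B -> CInBasis H A -> algC) : Prop :=
  forall u u' : CInBasis H A,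
    \sum_(o : COutBasis H B) (V o u)^* * V o u' = (u == u')%:R.

(* Honest i applies CNOT(Q_i -> fresh |0>) for each j <> i, i.e. each
   pseudo-copy equals x_i in the computational basis (CNOT|x>|0> = |x>|x>);
   copies to honest k are held by k, copies to corrupt j go into the
   corrupt input; the corrupt participants then apply V.  Writing the
   honest registers h, the amplitude of (h, b) is nonzero only if all the
   copies held by honest participants agree with the controls:
     h i k = h k k  for honest i, k,
   and then equals  sum_{x_C, a} V ((r, b)) ((x_C, a), p) * psi((x_H, x_C), a)
   with x_H i = h i i, p j i = x_H i, r j i = h i j. *)
Definition xH_of n (H : {set 'I_n}) (h : HReg H) : {ffun honT H -> bool} :=
  [ffun i => h i (val i)].
Definition copies_to_corrupt n (H : {set 'I_n}) (xh : {ffun honT H -> bool})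
  : {ffun corT H -> {ffun honT H -> bool}} := [ffun _ : corT H => xh].
Definition received_from_corrupt n (H : {set 'I_n}) (h : HReg H)
  : {ffun corT H -> {ffun honT H -> bool}} := [ffun j => [ffun i => h i (val j)]].
Definition honest_copies_ok n (H : {set 'I_n}) (h : HReg H) : bool :=
  [forall i : honT H, forall k : honT H, h i (val k) == h k (val k)].

Definition protocol_state n (H : {set 'I_n}) (A B : finType)
  (psi : QBasis H A -> algC) (V : COutBasis H B -> CInBasis H A -> algC)
  (z : FBasis H B) : algC :=
  let h := z.1 in let b := z.2 in
  if honest_copies_ok h then
    \sum_(xc : {ffun corT H -> bool}) \sum_(a : A)
       V (received_from_corrupt h, b) ((xc, a), copies_to_corrupt (xH_of h))
       * psi ((xH_of h, xc), a)
  else 0.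

(* Projector Pi onto span{|0^n>,|1^n>} for each honest participant's n qubits;
   the joint success projector is the product over honest participants. *)
Definition ghz_ok n (w : {ffun 'I_n -> bool}) : bool :=
  (w == [ffun=> false]) || (w == [ffun=> true]).
Definition success n (H : {set 'I_n}) (h : HReg H) : bool :=
  [forall i : honT H, ghz_ok (h i)].

Definition proj_success n (H : {set 'I_n}) (B : finType)
  (phi : FBasis H B -> algC) (z : FBasis H B) : algC :=
  if success z.1 then phi z else 0.

Definition post_state n (H : {set 'I_n}) (B : finType)
  (phi : FBasis H B -> algC) (z : FBasis H B) : algC :=
  proj_success phi z / sqrtC (sqnorm (proj_success phi)).

Definition hzero n (H : {set 'I_n}) : HReg H := [ffun _ => [ffun _ => false]].
Definition hone  n (H : {set 'I_n}) : HReg H := [ffun _ => [ffun _ => true]].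

(* Main.v *)
Require Import Defs.
From HB Require Import structures.
From mathcomp Require Import all_boot all_order all_algebra all_fingroup all_field.
Import Order.TTheory GRing.Theory Num.Theory.
Local Open Scope ring_scope.

Lemma const_of_ghz n (w : {ffun 'I_n -> bool}) j :
  ghz_ok w -> w = [ffun _ => w j].
Proof. by case/orP => /eqP ->; apply/ffunP => k; rewrite !ffunE. Qed.
Arguments const_of_ghz {n w} j.

Lemma struct_h n (H : {set 'I_n}) (i0 : honT H) (h : HReg H) :
  success h -> honest_copies_ok h -> h = hzero H \/ h = hone H.
Proof.
move=> /forallP succ /forallP ok.
have hc : forall i, h i = [ffun _ => h i0 (val i0)].
  move=> i; rewrite (const_of_ghz (val i0) (succ i)).
  by have /forallP /(_ i0) /eqP -> := ok i.
case E: (h i0 (val i0)); [right | left]; apply/ffunP => i; rewrite hc E !ffunE //.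
Qed.
Arguments struct_h {n H} i0 {h}.

Lemma hzero_neq n (H : {set 'I_n}) (i0 : honT H) : (hzero H == hone H) = false.
Proof.
apply/negbTE/eqP => E.
have := congr1 (fun h : HReg H => h i0 (val i0)) E.
by rewrite /= !ffunE.
Qed.
Arguments hzero_neq {n H} i0.

Theorem lemma1 (n : nat) (H : {set 'I_n}) (A B : finType)
  (psi : QBasis H A -> algC) (V : COutBasis H B -> CInBasis H A -> algC) :
  (1 < n)%N -> H != set0 ->
  unit_vec psi -> is_isometry V ->
  sqnorm (proj_success (protocol_state psi V)) != 0 ->
  (exists (alpha beta : algC) (psi0 psi1 : B -> algC),
     unit_vec psi0 /\ unit_vec psi1 /\
     `|alpha| ^+ 2 + `|beta| ^+ 2 = 1 /\
     forall (h : HReg H) (b : B),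
       post_state (protocol_state psi V) (h, b) =
         alpha * (h == hzero H)%:R * psi0 b + beta * (h == hone H)%:R * psi1 b)
  /\
  (forall (s : {perm honT H}) (h : HReg H) (b : B),
     post_state (protocol_state psi V) ([ffun i => h (s i)], b) =
     post_state (protocol_state psi V) (h, b)).
Proof.
move=> _ Hne _ _ Snz.
have [x0 Hx0] : exists x, x \in H by apply/set0Pn.
pose i0 : honT H := exist _ x0 Hx0.
set f := proj_success (protocol_state psi V).
have fform : forall h b, f (h, b) =
    (h == hzero H)%:R * f (hzero H, b) + (h == hone H)%:R * f (hone H, b).
  move=> h b.
  case: (eqVneq h (hzero H)) => [->|nz].
    by rewrite (hzero_neq i0) mul1r mul0r addr0.
  case: (eqVneq h (hone H)) => [->|no].
    by rewrite mul1r mul0r add0r.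
  rewrite !mul0r addr0 /f /proj_success /=; case: ifP => // sc.
  rewrite /protocol_state /=; case: ifP => // ok.
  by case: (struct_h i0 sc ok) => E; [move: nz | move: no]; rewrite E eqxx.
pose s0 := \sum_(b : B) `|f (hzero H, b)| ^+ 2.
pose s1 := \sum_(b : B) `|f (hone H, b)| ^+ 2.
have s0ge : 0 <= s0 by apply: sumr_ge0 => b _; rewrite exprn_ge0.
have s1ge : 0 <= s1 by apply: sumr_ge0 => b _; rewrite exprn_ge0.
have Sdec : sqnorm f = s0 + s1.
  have -> : sqnorm f = \sum_(h : HReg H) \sum_(b : B) `|f (h, b)| ^+ 2.
    by rewrite pair_bigA; apply: eq_bigr => -[h b].
  rewrite (bigD1 (hzero H)) //= (bigD1 (hone H)) /=; last by rewrite eq_sym (hzero_neq i0).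
  rewrite [X in _ + (_ + X)]big1 ?addr0 // => h /andP [no nz].
  apply: big1 => b _; rewrite fform (negbTE no) (negbTE nz) !mul0r addr0.
  by rewrite normr0 expr0n.
have b0 : B.
  move: Snz; rewrite /sqnorm; case: (pickP (fun _ : B => true)) => [b|e] //.
  by rewrite big1 ?eqxx // => -[h b]; have := e b.
set N := sqrtC (sqnorm f).
have Nnz : N != 0 by rewrite sqrtC_eq0.
have Nge : 0 <= N by rewrite sqrtC_ge0 Sdec addr_ge0.
have N2 : `|N| ^+ 2 = s0 + s1 by rewrite ger0_norm // sqrtCK Sdec.
have mk : forall (s : algC) (g : B -> algC), s = \sum_b `|g b| ^+ 2 ->
    exists (al : algC) (p : B -> algC), unit_vec p /\ `|al| ^+ 2 = s / (s0 + s1)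
      /\ forall b, g b / N = al * p b.
  move=> s g sE.
  have sge : 0 <= s by rewrite sE; apply: sumr_ge0 => b _; rewrite exprn_ge0.
  case: (eqVneq s 0) => [s0E|snz].
    exists 0, (fun b => (b == b0)%:R); split; last split.
    - rewrite /unit_vec /sqnorm (bigD1 b0) //= eqxx normr1 expr1n big1 ?addr0 //.
      by move=> b /negbTE ->; rewrite normr0 expr0n.
    - by rewrite s0E normr0 expr0n mul0r.
    - move=> b; rewrite mul0r.
      have /psumr_eq0P Z : \sum_b `|g b| ^+ 2 = 0 by rewrite -sE.
      have : `|g b| ^+ 2 = 0 by apply: Z => // c _; rewrite exprn_ge0.
      by move/eqP; rewrite expf_eq0 normr_eq0 => /andP [_ /eqP ->]; rewrite mul0r.
  have ssnz : sqrtC s != 0 by rewrite sqrtC_eq0.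
  have ssge : 0 <= sqrtC s by rewrite sqrtC_ge0.
  exists (sqrtC s / N), (fun b => g b / sqrtC s); split; last split.
  - rewrite /unit_vec /sqnorm.
    under eq_bigr => b _ do rewrite normrM normfV exprMn exprVn (ger0_norm ssge) sqrtCK.
    by rewrite -mulr_suml -sE mulfV.
  - by rewrite normrM normfV exprMn exprVn (ger0_norm ssge) sqrtCK N2.
  - by move=> b; rewrite [RHS]mulrAC mulrCA mulfV ?mulr1.
have [al [p0 [u0 [a2 e0]]]] := mk s0 (fun b => f (hzero H, b)) erefl.
have [be [p1 [u1 [b2 e1]]]] := mk s1 (fun b => f (hone H, b)) erefl.
have decomp : forall h b, post_state (protocol_state psi V) (h, b) =
    al * (h == hzero H)%:R * p0 b + be * (h == hone H)%:R * p1 b.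
  move=> h b; rewrite /post_state -/f -/N.
  rewrite fform mulrDl -!mulrA; simpl in e0, e1; rewrite e0 e1.
  by congr (_ + _); rewrite mulrCA mulrA.
split.
  exists al, be, p0, p1; split=> //; split=> //; split=> //.
  rewrite a2 b2 -mulrDl mulfV //; rewrite -N2 expf_eq0 normr_eq0 (negbTE Nnz).
  by rewrite andbF.
move=> s h b; rewrite !decomp.
have perm_eq : forall c : bool, ([ffun i => h (s i)] == [ffun _ => [ffun _ => c]])
    = (h == [ffun _ => [ffun _ => c]]).
  move=> c; apply/eqP/eqP => E; apply/ffunP => i; last by rewrite !ffunE E ffunE.
  have := congr1 (fun g : HReg H => g ((s^-1)%g i)) E.
  by rewrite /= !ffunE permKV.
by rewrite /hzero /hone !perm_eq.
Qed.
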